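(* Let $\mathcal S$ be a Hilbert space, $B$ a bounded normal operator on $\mathcal S$, and $g\in\mathscr T'$. Then the map $e^{B^*\otimes a(g)}$ is injective on $\mathcal S\hat\otimes\mathcal F_{\rm fin}(\mathscr T)$. Consequently $\langle\Psi,\Phi\rangle_{B,g}:=\langle e^{B^*\otimes a(g)}\Psi,e^{B^*\otimes a(g)}\Phi\rangle_{\mathcal S\otimes\mathcal F(\mathfrak h)}$ is a non-degenerate inner product on $\mathcal S\hat\otimes\mathcal F_{\rm fin}(\mathscr T)$.
   Context: Let $\mathfrak h$ be a complex Hilbert space, $\mathscr T$ a topological vector space continuously embedded in $\mathfrak h$ with dense image, $\mathscr T'$ the space of continuous antilinear functionals on $\mathscr T$; $\langle\varphi,f\rangle:=\overline{\varphi(f)}$ for $\varphi\in\mathscr T'$, $f\in\mathscr T$. $\mathcal F(\mathfrak h)$ is the symmetric Fock space, $\mathcal F_{\rm fin}(\mathscr T)$ the vectors with finitely many nonzero components, the $n$-th in the algebraic symmetric tensor product of $n$ copies of $\mathscr T$. For $g\in\mathscr T'$, $a(g)$ on $\mathcal F_{\rm fin}(\mathscr T)$ is defined linearly by $(a(g)\Psi)_n=\frac{\sqrt{n+1}}{(n+1)!}\sum_{\sigma\in S_{n+1}}\langle g,\psi_{\sigma(1)}\rangle\psi_{\sigma(2)}\otimes\cdots\otimes\psi_{\sigma(n+1)}$ for $\Psi_{n+1}=\psi_1\otimes_s\cdots\otimes_s\psi_{n+1}$. $\hat\otimes$ denotes the algebraic tensor product. $e^{B^*\otimes a(g)}$ is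 defined on $\mathcal S\hat\otimes\mathcal F_{\rm fin}(\mathscr T)$ by linear extension of $e^{B^*\otimes a(g)}(\varphi\otimes\Xi)=\sum_{k\ge0}\frac1{k!}((B^* )^k\varphi)\otimes(a(g)^k\Xi)$ (a finite sum). *)

(* Defs.v *)
From HB Require Import structures.
From mathcomp Require Import all_boot all_order all_algebra all_fingroup.
From mathcomp Require Import reals.
From mathcomp Require Import complex.
Set Implicit Arguments. Unset Strict Implicit. Unset Printing Implicit Defensive.
Import Order.TTheory GRing.Theory Num.Theory.
Local Open Scope ring_scope.
Local Open Scope complex_scope.

Section Defs.
Variable R : realType.
Local Notation C := R[i].

(* inner product: antilinear in the first, linear in the second argument *)
Definition is_inner_product (V : lmodType C) (ip : V -> V -> C) : Prop :=
  [/\ (forall x y z (c : C), ip x (c *: y + z) = c * ip x y + ip x z),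
      (forall x y, ip y x = (ip x y)^*),
      (forall x, 0 <= ip x x) &
      (forall x, ip x x = 0 -> x = 0)].

(* completeness w.r.t. the norm ||x|| = sqrt <x,x> (stated with squared norms) *)
Definition ip_complete (V : lmodType C) (ip : V -> V -> C) : Prop :=
  forall u : nat -> V,
    (forall e : C, 0 < e -> exists N, forall m n, (N <= m)%N -> (N <= n)%N ->
        ip (u m - u n) (u m - u n) < e) ->
    exists l : V, forall e : C, 0 < e -> exists N, forall n, (N <= n)%N ->
        ip (u n - l) (u n - l) < e.

Definition is_hilbert (V : lmodType C) (ip : V -> V -> C) : Prop :=
  is_inner_product ip /\ ip_complete ip.

Definition bounded_op (V : lmodType C) (ip : V -> V -> C) (B : V -> V) : Prop :=
  exists M : C, forall x, ip (B x) (B x) <= M * ip x x.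

Definition is_adjoint (V : lmodType C) (ip : V -> V -> C) (B Bs : V -> V) : Prop :=
  forall x y, ip (B x) y = ip x (Bs y).

Definition normal_op (V : lmodType C) (ip : V -> V -> C) (B Bs : V -> V) : Prop :=
  [/\ linear B, bounded_op ip B, is_adjoint ip B Bs & forall x, B (Bs x) = Bs (B x)].

Definition is_topology (T : Type) (op : (T -> Prop) -> Prop) : Prop :=
  [/\ op (fun _ => True),
      (forall U W, op U -> op W -> op (fun x => U x /\ W x)) &
      (forall (I : Type) (F : I -> T -> Prop), (forall i, op (F i)) ->
          op (fun x => exists i, F i x))].

Definition is_tvs (T : lmodType C) (op : (T -> Prop) -> Prop) : Prop :=
  [/\ is_topology op,
      (forall x y U, op U -> U (x + y) -> exists V W, [/\ op V, op W, V x, W y &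
           forall v w, V v -> W w -> U (v + w)]) &
      (forall (c : C) x U, op U -> U (c *: x) -> exists (e : C) V, [/\ 0 < e, op V, V x &
           forall (d : C) v, `|d - c| < e -> V v -> U (d *: v)])].

Definition cont_dense_embedding (T : lmodType C) (op : (T -> Prop) -> Prop)
    (H : lmodType C) (iph : H -> H -> C) (j : T -> H) : Prop :=
  [/\ linear j, injective j,
      (forall x (e : C), 0 < e -> exists U, [/\ op U, U x &
          forall y, U y -> iph (j y - j x) (j y - j x) < e]) &
      (forall f (e : C), 0 < e -> exists t, iph (j t - f) (j t - f) < e)].

Definition in_dual (T : lmodType C) (op : (T -> Prop) -> Prop) (g : T -> C) : Prop :=
  (forall (c : C) x y, g (c *: x + y) = c^* * g x + g y) /\
  (forall x (e : C), 0 < e -> exists U, [/\ op U, U x &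
      forall y, U y -> `|g y - g x| < e]).

Variables (S T : lmodType C).

(* A "full" formal tensor: finite sum of terms (c, s, [psi_1;..;psi_n])
   meaning  c . s (x) psi_1 (x) ... (x) psi_n  in  S (x) (n-fold tensor power).
   Two formal tensors denote the same vector in S (x) F(h) iff their difference
   has norm zero (see fzero). *)
Definition ftensor := seq (C * S * seq T).

Definition fscale (c : C) (X : ftensor) : ftensor :=
  [seq (c * t.1.1, t.1.2, t.2) | t <- X].
Definition fsub (X Y : ftensor) : ftensor := X ++ fscale (-1) Y.

(* inner product of S (x) F(h) (full Fock space; different particle numbers
   are orthogonal), computed on formal tensors *)
Definition ftensor_ip (ips : S -> S -> C) (H : lmodType C) (iph : H -> H -> C)
    (j : T -> H) (X Y : ftensor) : C :=
  \sum_(t <- X) \sum_(u <- Y)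
    (t.1.1)^* * u.1.1 * ips t.1.2 u.1.2 *
    (if size t.2 == size u.2 then \prod_(k < size t.2) iph (j (nth 0 t.2 k)) (j (nth 0 u.2 k))
     else 0).

(* Elements of S ^(x) F_fin(T): finite sums of terms (c, s, [psi_1;..;psi_n])
   meaning  c . s (x) (psi_1 (x)_s ... (x)_s psi_n) *)
Definition dtensor := seq (C * S * seq T).

(* psi_1 (x)_s ... (x)_s psi_n = (1/n!) sum_sigma psi_sigma(1) (x) ... (x) psi_sigma(n) *)
Definition symterm (t : C * S * seq T) : ftensor :=
  let n := size t.2 in
  [seq ((n`!%:R)^-1 * t.1.1, t.1.2, [seq nth 0 t.2 (val (s i)) | i <- enum 'I_n])
  | s : {perm 'I_n} <- enum {perm 'I_n}].

Definition embed (X : dtensor) : ftensor := flatten [seq symterm t | t <- X].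

(* a(g) acting on a full tensor: (a(g) psi_1(x)...(x)psi_{n+1}) = sqrt(n+1) <g,psi_1> psi_2(x)...(x)psi_{n+1},
   which on psi_1 (x)_s ... (x)_s psi_{n+1} is exactly the formula of the paper;
   <g, f> := conj (g f). *)
Definition annk (g : T -> C) (k : nat) (ps : seq T) : C :=
  if (k <= size ps)%N then
    \prod_(i < k) ((Num.sqrt ((size ps - i)%N%:R : R))%:C * (g (nth 0 ps i))^*)
  else 0.

(* e^{B^dag (x) a(g)} on a formal tensor: sum_k (1/k!) (Bdag^k s) (x) (a(g)^k Xi), Bdag = B^dagger *)
Definition expBa (Bs : S -> S) (g : T -> C) (X : ftensor) : ftensor :=
  flatten [seq [seq ((k`!%:R)^-1 * annk g k t.2 * t.1.1, iter k Bs t.1.2, drop k t.2)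
               | k <- iota 0 (size t.2).+1] | t <- X].

End Defs.

(* Main.v *)
Require Import Defs.
From HB Require Import structures.
From mathcomp Require Import all_boot all_order all_algebra all_fingroup.
From mathcomp Require Import reals.
From mathcomp Require Import complex.
From mathcomp Require Import ring zify.
From Stdlib Require Import FunctionalExtensionality.
Import Order.TTheory GRing.Theory Num.Theory.
Local Open Scope ring_scope.
Local Open Scope complex_scope.
Notation "x ^cj" := (Num.conj x) (at level 2, format "x ^cj").
Set Implicit Arguments. Unset Strict Implicit. Unset Printing Implicit Defensive.

Section Conj.
Variable R : realType.
Local Notation C := R[i].
Lemma cjM (x y : C) : (x * y)^cj = x^cj * y^cj. Proof. exact: rmorphM. Qed.
Lemma cjD (x y : C) : (x + y)^cj = x^cj + y^cj. Proof. exact: rmorphD. Qed.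
Lemma cjN (x : C) : (- x)^cj = - x^cj. Proof. exact: rmorphN. Qed.
Lemma cjV (x : C) : (x^-1)^cj = (x^cj)^-1. Proof. exact: fmorphV. Qed.
Lemma cj1 : (1 : C)^cj = 1. Proof. exact: rmorph1. Qed.
Lemma cj0 : (0 : C)^cj = 0. Proof. exact: rmorph0. Qed.
Lemma cjN1 : (-1 : C)^cj = -1. Proof. exact: rmorphN1. Qed.
Lemma cjK (x : C) : (x^cj)^cj = x. Proof. exact: conjCK. Qed.
Lemma conjE (x : C) : conjc x = x^cj. Proof. by []. Qed.
Lemma cj_sum (I : Type) (r : seq I) (P : pred I) (F : I -> C) :
  (\sum_(i <- r | P i) F i)^cj = \sum_(i <- r | P i) (F i)^cj.
Proof. elim: r => [|x r IH]; first by rewrite !big_nil; exact: cj0. rewrite !big_cons; case: ifP => _; [rewrite cjD; congr (_ + _)|]; exact: IH. Qed.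
Lemma cj_prod (I : Type) (r : seq I) (P : pred I) (F : I -> C) :
  (\prod_(i <- r | P i) F i)^cj = \prod_(i <- r | P i) (F i)^cj.
Proof. elim: r => [|x r IH]; first by rewrite !big_nil; exact: cj1. rewrite !big_cons; case: ifP => _; [rewrite cjM; congr (_ * _)|]; exact: IH. Qed.
End Conj.

Section IP.
Variable R : realType.
Local Notation C := R[i].
Variables (V : lmodType C) (ip : V -> V -> C) (hip : is_inner_product ip).

Lemma ip_lin x y z (c : C) : ip x (c *: y + z) = c * ip x y + ip x z.
Proof. by case: hip. Qed.
Lemma ip_sym x y : ip y x = (ip x y)^cj.
Proof. by case: hip. Qed.
Lemma ip_ge0 x : 0 <= ip x x.
Proof. by case: hip. Qed.
Lemma ip_def x : ip x x = 0 -> x = 0.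
Proof. by case: hip => _ _ _ h; apply: h. Qed.
Lemma ip0r x : ip x 0 = 0.
Proof.
have := ip_lin x 0 0 1; rewrite scale1r addr0 mul1r => h.
by rewrite -[LHS]addr0 in h; move/addrI: h => <-.
Qed.
Lemma ip0l x : ip 0 x = 0.
Proof. by rewrite ip_sym ip0r cj0. Qed.
Lemma ipZr x y c : ip x (c *: y) = c * ip x y.
Proof. by rewrite -[c *: y]addr0 ip_lin ip0r addr0. Qed.
Lemma ipDr x y z : ip x (y + z) = ip x y + ip x z.
Proof. by rewrite -[y]scale1r ip_lin mul1r scale1r. Qed.
Lemma ipZl x y c : ip (c *: x) y = c^cj * ip x y.
Proof. by rewrite ip_sym ipZr cjM -ip_sym. Qed.
Lemma ipDl x y z : ip (x + y) z = ip x z + ip y z.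
Proof. by rewrite ip_sym ipDr cjD -!ip_sym. Qed.
Lemma ipNl x y : ip (- x) y = - ip x y.
Proof. by rewrite -scaleN1r ipZl cjN1 mulN1r. Qed.
Lemma ipNr x y : ip x (- y) = - ip x y.
Proof. by rewrite -scaleN1r ipZr mulN1r. Qed.
Lemma ip_real x : (ip x x)^cj = ip x x.
Proof. by rewrite -ip_sym. Qed.

End IP.

Section PSD.
Variable R : realType.
Local Notation C := R[i].

Definition psd m (M : 'I_m -> 'I_m -> C) :=
  forall a : 'I_m -> C, 0 <= \sum_i \sum_j (a i)^cj * a j * M i j.

Lemma psd_ones m : psd (fun (i j : 'I_m) => 1).
Proof.
move=> a.
have -> : \sum_i \sum_j (a i)^cj * a j * 1 = (\sum_i a i) * (\sum_i a i)^cj.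
  rewrite cj_sum mulrC big_distrl /=; apply: eq_bigr => i _.
  by rewrite big_distrr /=; apply: eq_bigr => k _; rewrite mulr1 mulrC.
exact: mulcJ_ge0.
Qed.

Lemma psd_scale m (M : 'I_m -> 'I_m -> C) (b : 'I_m -> C) :
  psd M -> psd (fun i j => (b i)^cj * b j * M i j).
Proof.
move=> hM a; have := hM (fun i => a i * b i).
congr (0 <= _); apply: eq_bigr => i _; apply: eq_bigr => k _.
rewrite cjM; ring.
Qed.

Lemma psd_sum m K (F : nat -> 'I_m -> 'I_m -> C) :
  (forall d, psd (F d)) -> psd (fun i j => \sum_(d < K) F d i j).
Proof.
move=> hF a.
have -> : \sum_i \sum_j (a i)^cj * a j * (\sum_(d < K) F d i j) =
   \sum_(d < K) \sum_i \sum_j (a i)^cj * a j * F d i j.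
  symmetry; rewrite exchange_big /=; apply: eq_bigr => i _.
  rewrite exchange_big /=; apply: eq_bigr => k _.
  by rewrite big_distrr.
by apply: sumr_ge0 => d _; apply: hF.
Qed.

Variables (V : lmodType C) (ip : V -> V -> C) (hip : is_inner_product ip).

Lemma psd_schur_aux m (M : 'I_m -> 'I_m -> C) : psd M ->
  forall n (y : 'I_m -> V), (forall i : 'I_m, (n <= i)%N -> y i = 0) ->
  psd (fun i j => M i j * ip (y i) (y j)).
Proof.
move=> hM; elim=> [|n IH] y hy a.
  rewrite big1 // => i _; rewrite big1 // => k _.
  by rewrite (hy i) // (ip0l hip) !mulr0.
pose v := \sum_(i : 'I_m | val i == n) y i.
pose r := ip v v.
pose al i := ip v (y i) / r.
pose z i := y i - al i *: v.
have hr : r^cj = r by rewrite (ip_real hip).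
have key : forall i k, ip (y i) (y k) = (al i)^cj * al k * r + ip (z i) (z k).
  move=> i k; have [r0|rn0] := eqVneq r 0.
    have v0 : v = 0 by apply: (ip_def hip).
    by rewrite /z /al r0 invr0 !mulr0 !scale0r !subr0 add0r.
  rewrite /z (ipDl hip) (ipDr hip) (ipDr hip) !(ipNl hip) !(ipNr hip) !(ipZl hip) !(ipZr hip).
  rewrite -/r (ip_sym hip v (y i)) /al !cjM cjV hr.
  field; exact: rn0.
have hz : forall i : 'I_m, (n <= i)%N -> z i = 0.
  move=> i; rewrite leq_eqVlt => /orP[/eqP ein|lti].
    have hv : v = y i by rewrite /v (big_pred1 i) // => k /=; rewrite ein; exact: val_eqE.
    rewrite /z /al /r hv; case: (eqVneq (ip (y i) (y i)) 0) => [r0|rn0].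
      by rewrite (ip_def hip r0) scaler0 subr0.
    by rewrite divff // scale1r subrr.
  by rewrite /z /al hy // (ip0r hip) mul0r scale0r subr0.
have := IH z hz a; have := hM (fun i => a i * al i) => h1 h2.
have -> : \sum_i \sum_j (a i)^cj * a j * (M i j * ip (y i) (y j)) =
   r * (\sum_i \sum_j (a i * al i)^cj * (a j * al j) * M i j) +
   \sum_i \sum_j (a i)^cj * a j * (M i j * ip (z i) (z j)).
  rewrite big_distrr -big_split /=; apply: eq_bigr => i _.
  rewrite big_distrr -big_split /=; apply: eq_bigr => k _.
  rewrite key !cjM; ring.
by apply: addr_ge0 => //; apply: mulr_ge0 => //; exact: ip_ge0.
Qed.

Lemma psd_schur m (M : 'I_m -> 'I_m -> C) (y : 'I_m -> V) :
  psd M -> psd (fun i j => M i j * ip (y i) (y j)).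
Proof. move=> hM; apply: (psd_schur_aux hM (n := m)) => i; by rewrite leqNgt ltn_ord. Qed.

End PSD.

Section Tensor.
Variable R : realType.
Local Notation C := R[i].
Variables (S T H : lmodType C) (ips : S -> S -> C) (iph : H -> H -> C) (j : T -> H).
Hypotheses (hips : is_inner_product ips) (hiph : is_inner_product iph).
Local Notation ip := (ftensor_ip ips iph j).
Local Notation ft := (ftensor S T).

Lemma ip_catl (A B W : ft) : ip (A ++ B) W = ip A W + ip B W.
Proof. by rewrite /ftensor_ip big_cat. Qed.

Lemma ip_catr (A B W : ft) : ip W (A ++ B) = ip W A + ip W B.
Proof. by rewrite /ftensor_ip -big_split; apply: eq_bigr => t _; rewrite big_cat. Qed.

Lemma ip_scalel c (A W : ft) : ip (fscale c A) W = c^cj * ip A W.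
Proof.
rewrite /ftensor_ip /fscale big_map big_distrr; apply: eq_bigr => t _.
rewrite big_distrr; apply: eq_bigr => u _ /=; rewrite cjM; ring.
Qed.

Lemma ip_scaler c (A W : ft) : ip W (fscale c A) = c * ip W A.
Proof.
rewrite /ftensor_ip big_distrr; apply: eq_bigr => t _.
rewrite /fscale big_map big_distrr; apply: eq_bigr => u _ /=; ring.
Qed.

Lemma ip_conj (A B : ft) : ip B A = (ip A B)^cj.
Proof.
rewrite /ftensor_ip cj_sum exchange_big; apply: eq_bigr => u _.
rewrite cj_sum; apply: eq_bigr => t _.
have [e|ne] := eqVneq (size t.2) (size u.2); last first.
  by rewrite !mulr0 cj0.
rewrite !cjM cjK -(ip_sym hips) cj_prod e.
have -> : \prod_(k < size u.2) (iph (j (nth 0 u.2 k)) (j (nth 0 t.2 k)))^cj =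
   \prod_(k < size u.2) iph (j (nth 0 t.2 k)) (j (nth 0 u.2 k)).
  by apply: eq_bigr => k _; rewrite -(ip_sym hiph).
ring.
Qed.

Definition x0 : C * S * seq T := (0, 0, [::]).

Lemma ip_psd (A : ft) : 0 <= ip A A.
Proof.
rewrite /ftensor_ip (big_nth x0) big_mkord.
under eq_bigr => i _ do rewrite (big_nth x0) big_mkord.
set m := size A.
pose sz (i : 'I_m) := size (nth x0 A i).2.
pose K := (\max_(t <- A) size t.2).+1.
have szK : forall i : 'I_m, (sz i < K)%N.
  move=> i; rewrite ltnS /sz; apply: (leq_bigmax_seq (F := fun t : C * S * seq T => size t.2)) => //.
  exact: mem_nth.
pose P (d : nat) (i k : 'I_m) := \prod_(l < d) iph (j (nth 0 (nth x0 A i).2 l)) (j (nth 0 (nth x0 A k).2 l)).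
have hP : forall d, psd (P d).
  elim=> [|d IH].
    have -> : P 0 = fun _ _ => 1 by apply: functional_extensionality => i; apply: functional_extensionality => k; rewrite /P big_ord0.
    exact: psd_ones.
  have -> : P d.+1 = fun i k => P d i k * iph (j (nth 0 (nth x0 A i).2 d)) (j (nth 0 (nth x0 A k).2 d)).
    by apply: functional_extensionality => i; apply: functional_extensionality => k; rewrite /P big_ord_recr.
  exact: (psd_schur hiph (fun i => j (nth 0 (nth x0 A i).2 d)) IH).
pose be (d : nat) (i : 'I_m) : C := (sz i == d)%:R.
pose Q (i k : 'I_m) := \sum_(d < K) (be d i)^cj * be d k * P d i k.
have hQ : psd Q.
  exact: (@psd_sum R m K (fun d i k => (be d i)^cj * be d k * P d i k) (fun d => psd_scale (be d) (hP d))).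
have hM := psd_schur hips (fun i => (nth x0 A i).1.2) hQ (fun i => (nth x0 A i).1.1).
apply: le_trans hM _; rewrite le_eqVlt; apply/orP; left; apply/eqP.
apply: eq_bigr => i _; apply: eq_bigr => k _ /=.
suff -> : Q i k = if size (nth x0 A i).2 == size (nth x0 A k).2 then
  \prod_(l < size (nth x0 A i).2) iph (j (nth 0 (nth x0 A i).2 l)) (j (nth 0 (nth x0 A k).2 l)) else 0.
  by rewrite -[RHS]mulrA; congr (_ * _); exact: mulrC.
rewrite /Q (bigD1 (Ordinal (szK i))) //= big1; last first.
  move=> d /eqP ne; rewrite /be.
  have -> : (sz i == d) = false by apply/negbTE/eqP => e; apply: ne; apply: val_inj.
  by rewrite cj0 !mul0r.
rewrite addr0 /be eqxx cj1 mul1r.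
rewrite /P /sz.
have [e|ne] := eqVneq (size (nth x0 A i).2) (size (nth x0 A k).2).
  by rewrite e mul1r.
by rewrite mul0r.
Qed.

Lemma ip_CS (A : ft) : ip A A = 0 -> forall W, ip A W = 0.
Proof.
move=> h0 W; set p := ip A W; set q := ip W W.
have hq : 0 <= q := ip_psd W.
have q1 : 0 < q + 1 by apply: ltr_wpDl.
have q2 : 0 < q + 2 by apply: ltr_wpDl => //; rewrite ltr0n.
have qr : q^cj = q by rewrite /q -ip_conj.
pose l := - p^cj / (q + 1).
have := ip_psd (A ++ fscale l W).
rewrite !ip_catl !ip_catr !ip_scalel !ip_scaler h0 -/p -/q (ip_conj A W) -/p.
have -> : 0 + l * p + (l^cj * p^cj + l^cj * (l * q)) =
    - (p * p^cj * ((q + 2) / ((q + 1) * (q + 1)))).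
  rewrite /l !cjM cjN cjK cjV cjD cj1 qr.
  field; by rewrite gt_eqF.
rewrite oppr_ge0 => hle.
have hX : 0 <= p * p^cj * ((q + 2) / ((q + 1) * (q + 1))).
  apply: mulr_ge0; first exact: mulcJ_ge0.
  by apply: divr_ge0; [exact: ltW | apply: mulr_ge0; exact: ltW].
have : p * p^cj * ((q + 2) / ((q + 1) * (q + 1))) == 0 by rewrite eq_le hle hX.
rewrite mulf_eq0 => /orP[|].
  by rewrite mulf_eq0 => /orP[/eqP //|]; rewrite conjC_eq0 => /eqP.
by rewrite mulf_eq0 invr_eq0 mulf_eq0 !gt_eqF.
Qed.

Lemma ip_decomp (A B : ft) : ip A B = \sum_(u <- B) u.1.1 * ip A [:: (1, u.1.2, u.2)].
Proof.
rewrite /ftensor_ip exchange_big; apply: eq_bigr => u _; rewrite big_distrr.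
apply: eq_bigr => t _; rewrite big_seq1 /= mulr1.
by rewrite !mulrA [u.1.1 * _]mulrC.
Qed.

Lemma ip_pure0 (A : ft) : (forall s phi, ip A [:: (1, s, phi)] = 0) -> forall B, ip A B = 0.
Proof. by move=> h B; rewrite ip_decomp big1 // => u _; rewrite h mulr0. Qed.

Lemma ip_suml (A W : ft) : ip A W = \sum_(t <- A) ip [:: t] W.
Proof. by rewrite /ftensor_ip; apply: eq_bigr => t _; rewrite big_seq1. Qed.

End Tensor.

Section ClaimC.
Variable R : realType.
Local Notation C := R[i].
Variables (T H : lmodType C) (iph : H -> H -> C) (j : T -> H).
Hypotheses (hiph : is_inner_product iph) (hjl : linear j) (hji : injective j).

Definition alin (f : T -> C) := forall c x y, f (c *: x + y) = c^cj * f x + f y.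

Lemma alin0 f : alin f -> f 0 = 0.
Proof.
move=> hf; have := hf 1 0 0; rewrite scale1r addr0 cj1 mul1r => h.
by rewrite -[LHS]addr0 in h; move/addrI: h => <-.
Qed.

Lemma alin_sum f (I : Type) (r : seq I) (b : I -> C) (x : I -> T) : alin f ->
  f (\sum_(t <- r) b t *: x t) = \sum_(t <- r) (b t)^cj * f (x t).
Proof.
move=> hf; elim: r => [|t r IH]; first by rewrite !big_nil alin0.
by rewrite !big_cons hf IH.
Qed.

Lemma j0 : j 0 = 0.
Proof.
have := hjl 1 0 0; rewrite scale1r addr0 scale1r => h.
by rewrite -[LHS]addr0 in h; move/addrI: h => <-.
Qed.

Lemma alin_iph y : alin (fun x => iph (j x) y).
Proof. by move=> c x z /=; rewrite hjl (ipDl hiph) (ipZl hiph). Qed.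

Lemma one_slot (I : Type) (r : seq I) (a : I -> C) (x : I -> T) :
  (forall y, \sum_(t <- r) a t * iph (j (x t)) (j y) = 0) ->
  forall f, alin f -> \sum_(t <- r) a t * f (x t) = 0.
Proof.
move=> h f hf.
pose v := \sum_(t <- r) (a t)^cj *: x t.
have Ef : forall g, alin g -> g v = \sum_(t <- r) a t * g (x t).
  by move=> g hg; rewrite /v alin_sum //; apply: eq_bigr => t _; rewrite cjK.
have : iph (j v) (j v) = 0 by rewrite (Ef _ (alin_iph (j v))); apply: h.
move/(ip_def hiph); rewrite -j0 => /hji v0.
by rewrite -Ef // v0 alin0.
Qed.

Lemma claimC (I : Type) (r : seq I) (a : I -> C) (psi : I -> nat -> T) N :
  (forall chi : nat -> T,
     \sum_(t <- r) a t * \prod_(l < N) iph (j (psi t l)) (j (chi l)) = 0) ->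
  forall F : nat -> T -> C, (forall l, alin (F l)) ->
  \sum_(t <- r) a t * \prod_(l < N) F l (psi t l) = 0.
Proof.
move=> h0 F hF.
have P : forall m (chi : nat -> T), \sum_(t <- r) a t * \prod_(l < N)
    (if (l < m)%N then F l (psi t l) else iph (j (psi t l)) (j (chi l))) = 0.
  elim=> [|m IH] chi.
    rewrite -[RHS](h0 chi); apply: eq_bigr => t _; congr (_ * _).
  case: (ltnP m N) => [mN|Nm]; last first.
    rewrite -[RHS](IH chi); apply: eq_bigr => t _; congr (_ * _).
    apply: eq_bigr => l _.
    have lm : (l < m)%N by apply: leq_trans (ltn_ord l) Nm.
    by rewrite lm ltnS ltnW.
  pose m' := Ordinal mN.
  pose G t := \prod_(l < N | l != m')
      (if (l < m.+1)%N then F l (psi t l) else iph (j (psi t l)) (j (chi l))).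
  have e1 : forall t, \sum_(i < N | i == m') (if (i < m.+1)%N then F i (psi t i) else iph (j (psi t i)) (j (chi i))) = 0 -> True by [].
  have E : \sum_(t <- r) a t * \prod_(l < N)
      (if (l < m.+1)%N then F l (psi t l) else iph (j (psi t l)) (j (chi l))) =
      \sum_(t <- r) (a t * G t) * F m (psi t m).
    apply: eq_bigr => t _; rewrite (bigD1 m') //= ltnSn.
    by rewrite [F m _ * _]mulrC mulrA.
  rewrite E; apply: (one_slot (a := fun t => a t * G t) (x := fun t => psi t m)) => //.
  move=> y; rewrite -[RHS](IH (fun l => if l == m then y else chi l)).
  apply eq_bigr; intros t _; rewrite (bigD1 m') //= ltnn eqxx.
  rewrite -mulrA [G t * _]mulrC; congr (_ * (_ * _)).
  apply: eq_bigr => l hl.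
  have lm : (nat_of_ord l == m) = false by apply/negbTE; exact: hl.
  by rewrite ltnS leq_eqVlt lm.
rewrite -[RHS](P N (fun _ => 0)).
apply eq_bigr => t _; congr (_ * _); apply: eq_bigr => l _.
by rewrite ltn_ord.
Qed.

End ClaimC.

Section Main.
Variable R : realType.
Local Notation C := R[i].
Variables (S T H : lmodType C) (ips : S -> S -> C) (iph : H -> H -> C) (j : T -> H).
Variables (B Bs : S -> S) (g : T -> C).
Hypotheses (hips : is_inner_product ips) (hiph : is_inner_product iph).
Hypotheses (hjl : linear j) (hji : injective j) (hadj : is_adjoint ips B Bs) (hg : alin g).
Local Notation ip := (ftensor_ip ips iph j).
Local Notation ft := (ftensor S T).
Local Notation E := (expBa Bs g).

Lemma adj_iter k x y : ips (iter k Bs x) y = ips x (iter k B y).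
Proof.
elim: k x y => [//|k IH] x y.
rewrite iterS iterSr -IH.
by rewrite (ip_sym hips) -hadj -(ip_sym hips).
Qed.

Lemma expBa_cat (A A' : ft) : E (A ++ A') = E A ++ E A'.
Proof. by rewrite /expBa map_cat flatten_cat. Qed.

Lemma expBa_scale c (A : ft) : E (fscale c A) = fscale c (E A).
Proof.
rewrite /expBa /fscale map_flatten -!map_comp; congr flatten; apply eq_map => t; rewrite /comp.
rewrite -map_comp; apply eq_map => k; rewrite /comp /=.
by rewrite mulrCA.
Qed.

Lemma ipE_suml (A W : ft) : ip (E A) W = \sum_(t <- A) ip (E [:: t]) W.
Proof.
elim: A => [|t A IH]; first by rewrite big_nil /ftensor_ip /expBa big_nil.
rewrite big_cons -IH -ip_catl -expBa_cat; done.
Qed.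

Lemma sum_split_filter (I : Type) (A : seq I) (P : pred I) (h : I -> C) :
  \sum_(t <- A) h t = \sum_(t <- filter P A) h t + \sum_(t <- filter (predC P) A) h t.
Proof. by rewrite !big_filter (bigID P). Qed.

Lemma ipE_pure (Z : ft) s phi : ip (E Z) [:: (1, s, phi)] =
  \sum_(t <- Z) \sum_(k <- iota 0 (size t.2).+1)
    (((k`!)%:R)^-1 * annk g k t.2 * t.1.1)^cj * 1 * ips (iter k Bs t.1.2) s *
    (if size (drop k t.2) == size phi then
       \prod_(l < size (drop k t.2)) iph (j (nth 0 (drop k t.2) l)) (j (nth 0 phi l))
     else 0).
Proof.
rewrite /ftensor_ip /expBa big_flatten big_map; apply: eq_bigr => t _.
by rewrite big_map; apply: eq_bigr => k _; rewrite big_seq1.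
Qed.

Lemma W_pure (Z : ft) : ip Z Z = 0 -> forall s phi, ip (E Z) [:: (1, s, phi)] = 0.
Proof.
move=> h0 s phi; have hZ := ip_CS hips hiph h0.
set n := size phi.
pose M := (\max_(t <- Z) size t.2).+1.
rewrite ipE_pure.
pose G (t : C * S * seq T) k := (((k`!)%:R)^-1 * annk g k t.2 * t.1.1)^cj * ips (iter k Bs t.1.2) s *
   \prod_(l < n) iph (j (nth 0 t.2 (k + l))) (j (nth 0 phi l)).
transitivity (\sum_(t <- Z) \sum_(0 <= k < M) ((size t.2 == k + n)%:R * G t k)).
  apply: eq_big_seq => t tZ.
  have sM : ((size t.2).+1 <= M)%N.
    by rewrite ltnS; apply: (leq_bigmax_seq (F := fun t : C * S * seq T => size t.2)).
  have -> : iota 0 (size t.2).+1 = index_iota 0 (size t.2).+1 by rewrite /index_iota subn0.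
  rewrite (big_nat_widen _ _ _ _ _ sM) big_mkcond /=.
  apply eq_bigr => k _.
  case: (ltnP k (size t.2).+1) => hk.
    rewrite size_drop.
    have [e|ne] := eqVneq (size t.2 - k)%N n.
      have e' : (size t.2 == k + n) by apply/eqP; lia.
      rewrite e' mul1r /G e mulr1; congr (_ * _).
      by apply: eq_bigr => l _; rewrite nth_drop.
    have e' : (size t.2 == k + n) = false by apply/negbTE/eqP => e'; move/eqP: ne; lia.
    by rewrite e' mul0r mulr0.
  have e' : (size t.2 == k + n) = false by apply/negbTE/eqP => e'; lia.
  by rewrite e' mul0r.
rewrite exchange_big /= big1 // => k _.
pose N := (k + n)%N.
pose kap := (((k`!)%:R)^-1)^cj * \prod_(i < k) ((Num.sqrt ((N - i)%:R : R))%:C)^cj.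
pose a (t : C * S * seq T) := (size t.2 == N)%:R * kap * t.1.1^cj * ips t.1.2 (iter k B s).
pose F (l : nat) : T -> C := if (l < k)%N then g else (fun x => iph (j x) (j (nth 0 phi (l - k)))).
have hF : forall l, alin (F l).
  by move=> l; rewrite /F; case: ifP => _; [exact: hg | exact: alin_iph].
have hyp : forall chi : nat -> T, \sum_(t <- Z) a t * \prod_(l < N) iph (j (nth 0 t.2 l)) (j (chi l)) = 0.
  move=> chi.
  transitivity (kap * ip Z [:: (1, iter k B s, mkseq chi N)]); last by rewrite hZ mulr0.
rewrite /ftensor_ip big_distrr; apply eq_bigr => t _.
rewrite big_seq1 /= size_mkseq /a.
have [e|ne] := eqVneq (size t.2) N; last by rewrite !mul0r !mulr0.
rewrite e mul1r.
have -> : \prod_(l < N) iph (j (nth 0 t.2 l)) (j (nth 0 (mkseq chi N) l)) =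
    \prod_(l < N) iph (j (nth 0 t.2 l)) (j (chi l)).
  by apply: eq_bigr => l _; rewrite nth_mkseq.
ring.
have hC := claimC hiph hjl hji (r := Z) (a := a) (psi := fun t l => nth 0 t.2 l) (N := N) hyp hF.
rewrite -[RHS]hC.
  apply eq_bigr => t _; rewrite /a.
  have [e|ne] := eqVneq (size t.2) N; last by rewrite !mul0r.
  rewrite !mul1r /G /annk e leq_addr /N big_split_ord /= -adj_iter.
  rewrite !cjM cj_prod.
  under eq_bigr => i _ do rewrite cjM cjK.
  rewrite big_split /=.
  have -> : \prod_(i < k) F (lshift n i) (nth 0 t.2 (lshift n i)) = \prod_(i < k) g (nth 0 t.2 i).
    by apply: eq_bigr => i _; rewrite /F /= ltn_ord.
  have -> : \prod_(i < n) F (rshift k i) (nth 0 t.2 (rshift k i)) =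
      \prod_(l < n) iph (j (nth 0 t.2 (k + l))) (j (nth 0 phi l)).
    by apply: eq_bigr => i _; rewrite /F /= ltnNge leq_addr /= addKn.
  rewrite /kap /N; ring.
Qed.

Lemma W_all (Z : ft) : ip Z Z = 0 -> forall W, ip (E Z) W = 0.
Proof. by move=> h; apply: ip_pure0 => s phi; apply: W_pure. Qed.

Lemma top_pure (Z : ft) N s phi : (forall t, t \in Z -> (size t.2 <= N)%N) -> size phi = N ->
  ip (E Z) [:: (1, s, phi)] = ip Z [:: (1, s, phi)].
Proof.
move=> hN hphi; rewrite ipE_pure /ftensor_ip; apply: eq_big_seq => t tZ.
have -> : iota 0 (size t.2).+1 = index_iota 0 (size t.2).+1 by rewrite /index_iota subn0.
rewrite big_nat_recl // [X in _ + X]big1_seq ?addr0; last first.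
  move=> i /andP[_]; rewrite mem_index_iota => /andP[_ hi]; rewrite size_drop.
  have -> : ((size t.2 - i.+1)%N == size phi) = false.
    apply/negbTE/eqP => e; have := hN t tZ; lia.
  by rewrite mulr0.
rewrite big_seq1 /= /annk leq0n big_ord0 fact0 invr1 !mul1r drop0.
done.
Qed.

Lemma inj_aux N : forall Z : ft, (forall t, t \in Z -> (size t.2 < N)%N) ->
  ip (E Z) (E Z) = 0 -> ip Z Z = 0.
Proof.
elim: N => [|N IH] Z hZ h.
  by case: Z hZ {h} => [|t Z] hZ; [rewrite /ftensor_ip big_nil | have := hZ t (mem_head _ _)].
have hE := ip_CS hips hiph h.
pose P := fun t : C * S * seq T => size t.2 == N.
set Zt := filter P Z; set Zl := filter (predC P) Z.
have splitZ : forall W, ip Z W = ip Zt W + ip Zl W.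
  by move=> W; rewrite ip_suml (sum_split_filter _ P) -!ip_suml.
have splitE : forall W, ip (E Z) W = ip (E Zt) W + ip (E Zl) W.
  by move=> W; rewrite ipE_suml (sum_split_filter _ P) -!ipE_suml.
have ht : forall W, ip Zt W = 0.
  apply: ip_pure0 => s phi.
  have [e|ne] := eqVneq (size phi) N.
    have := splitZ [:: (1, s, phi)].
    have hN : forall t, t \in Z -> (size t.2 <= N)%N by move=> t /hZ.
    rewrite -(top_pure s hN e) hE.
    have -> : ip Zl [:: (1, s, phi)] = 0.
      rewrite /ftensor_ip big_seq big1 // => t; rewrite mem_filter /= /P => /andP[ht _].
      by rewrite big_seq1 /= e (negbTE ht) mulr0.
    by rewrite addr0 => ->.
  rewrite /ftensor_ip big_seq big1 // => t; rewrite mem_filter /= /P => /andP[/eqP ht _].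
  by rewrite big_seq1 /= ht eq_sym (negbTE ne) mulr0.
have hEt := W_all (ht Zt).
have hl : ip Zl Zl = 0.
  apply: IH.
    move=> t; rewrite mem_filter /= /P => /andP[ne tZ].
    by have := hZ t tZ; rewrite ltnS leq_eqVlt (negbTE ne).
  by have := splitE (E Zl); rewrite hE hEt add0r => ->.
have hl' := ip_CS hips hiph hl.
by rewrite splitZ ht hl' addr0.
Qed.

Lemma inj_all (Z : ft) : ip (E Z) (E Z) = 0 -> ip Z Z = 0.
Proof.
apply: (inj_aux (N := (\max_(t <- Z) size t.2).+1)) => t tZ.
by rewrite ltnS; apply: (leq_bigmax_seq (F := fun t : C * S * seq T => size t.2)).
Qed.

End Main.

Section Embed.
Variable R : realType.
Local Notation C := R[i].
Variables (S T : lmodType C).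

Lemma embed_cat (X Y : dtensor S T) : embed (X ++ Y) = embed X ++ embed Y.
Proof. by rewrite /embed map_cat flatten_cat. Qed.

Lemma embed_scale c (X : dtensor S T) : embed (fscale c X) = fscale c (embed X).
Proof.
rewrite /embed /fscale map_flatten -!map_comp; congr flatten; apply eq_map => t; rewrite /comp.
rewrite /symterm /= -map_comp; apply eq_map => k; rewrite /comp /=.
by rewrite mulrCA.
Qed.

Lemma embed_nil : embed ([::] : dtensor S T) = [::].
Proof. by []. Qed.
End Embed.

Theorem proposition3p7
  (R : realType)
  (* the Hilbert space h *)
  (H : lmodType R[i]) (iph : H -> H -> R[i]) (hH : is_hilbert iph)
  (* the topological vector space T, continuously and densely embedded in h by j *)
  (T : lmodType R[i]) (opT : (T -> Prop) -> Prop) (hT : is_tvs opT)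
  (j : T -> H) (hj : cont_dense_embedding opT iph j)
  (* the Hilbert space S and the bounded normal operator B with adjoint Bs *)
  (S : lmodType R[i]) (ips : S -> S -> R[i]) (hS : is_hilbert ips)
  (B Bs : S -> S) (hB : normal_op ips B Bs)
  (* g in T' *)
  (g : T -> R[i]) (hg : in_dual opT g) :
  let ip := ftensor_ip ips iph j in
  (* equality of elements of S ^(x) F_fin(T) (as vectors of S (x) F(h)) *)
  let equiv (X Y : dtensor S T) := ip (fsub (embed X) (embed Y)) (fsub (embed X) (embed Y)) = 0 in
  (* E := e^{B^* (x) a(g)} *)
  let E (X : dtensor S T) := expBa Bs g (embed X) in
  let ipBg (X Y : dtensor S T) := ip (E X) (E Y) in
  (* E is a well-defined injective map on S ^(x) F_fin(T) *)
  (forall X Y, equiv X Y <-> ip (fsub (E X) (E Y)) (fsub (E X) (E Y)) = 0) /\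
  (* <.,.>_{B,g} is a well-defined non-degenerate inner product on S ^(x) F_fin(T) *)
  [/\ (forall X X' Y, equiv X X' -> ipBg X Y = ipBg X' Y),
      (forall X Y1 Y2 (c : R[i]), ipBg X (fscale c Y1 ++ Y2) = c * ipBg X Y1 + ipBg X Y2),
      (forall X Y, ipBg Y X = (ipBg X Y)^*),
      (forall X, 0 <= ipBg X X) &
      (forall X, (forall Y, ipBg X Y = 0) -> equiv X [::])].
Proof.

move=> ip equiv E ipBg.
have hipsI : is_inner_product ips by case: hS.
have hiphI : is_inner_product iph by case: hH.
case: hj => hjl hji _ _.
case: hB => _ _ hadj _.
have hgl : alin g by case: hg.
have EW : forall Z, ftensor_ip ips iph j Z Z = 0 ->
    ftensor_ip ips iph j (expBa Bs g Z) (expBa Bs g Z) = 0.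
  by move=> Z h; apply: (W_all hipsI hiphI hjl hji hadj hgl h).
have EI : forall Z, ftensor_ip ips iph j (expBa Bs g Z) (expBa Bs g Z) = 0 ->
    ftensor_ip ips iph j Z Z = 0.
  by move=> Z h; apply: (inj_all hipsI hiphI hjl hji hadj hgl h).
have Efsub : forall X Y, fsub (E X) (E Y) = expBa Bs g (fsub (embed X) (embed Y)).
  by move=> X Y; rewrite /E /fsub expBa_cat expBa_scale.
split.
  move=> X Y; rewrite /equiv Efsub /ip; split; [exact: EW | exact: EI].
split.
- move=> X X' Y; rewrite /equiv /ipBg /ip => h.
  have h1 := EW _ h; rewrite -Efsub in h1.
  have := ip_CS hipsI hiphI h1 (E Y).
  rewrite /fsub ip_catl ip_scalel cjN1 mulN1r => /eqP; rewrite subr_eq0 => /eqP.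
  done.
- move=> X Y1 Y2 c; rewrite /ipBg /E /ip embed_cat embed_scale expBa_cat expBa_scale.
  by rewrite ip_catr ip_scaler.
- by move=> X Y; rewrite /ipBg /ip (ip_conj j hipsI hiphI).
- by move=> X; rewrite /ipBg /ip; apply: (ip_psd j hipsI hiphI).
- move=> X h; rewrite /equiv /ip /fsub embed_nil /= cats0.
  by apply: EI; apply: h.
Qed.
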